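(* Let $M,K$ be real symmetric positive definite $N\times N$ matrices, $\Delta t>0$, and let $(f_{k+\frac12})_{k\ge0}$ be vectors in $\mathbb{R}^N$. Let $(q_n,p_n)_{n\ge0}$ satisfy, for all $n\ge0$, $$q_{n+1}=q_n+\Delta t\,M^{-1}\frac{p_n+p_{n+1}}2,\qquad p_{n+1}=p_n-\Delta t\,K\frac{q_n+q_{n+1}}2+\Delta t\,f_{n+\frac12}.$$ Let $E_n:=\frac12p_n^TM^{-1}p_n+\frac12q_n^TKq_n$ and $|f|_{M^{-1}}:=\sqrt{f^TM^{-1}f}$. Then for every $n\ge0$, $$\big|\sqrt{E_n}-\sqrt{E_0}\big|\le\Delta t\,2^{-1/2}\sum_{k=0}^{n-1}|f_{k+\frac12}|_{M^{-1}}.$$ *)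

(* Defs.v *)
From mathcomp Require Import all_boot all_order all_algebra.
Set Implicit Arguments. Unset Strict Implicit. Unset Printing Implicit Defensive.
Import Order.TTheory GRing.Theory Num.Theory.
Local Open Scope ring_scope.

Definition qform (R : ringType) (N : nat) (A : 'M[R]_N) (x : 'cV[R]_N) : R :=
  (x^T *m A *m x) 0 0.

Definition sym_posdef (R : realFieldType) (N : nat) (A : 'M[R]_N) : Prop :=
  A^T = A /\ (forall x : 'cV[R]_N, x != 0 -> 0 < qform A x).

Definition energy (R : realFieldType) (N : nat) (M K : 'M[R]_N) (q p : 'cV[R]_N) : R :=
  2^-1 * qform (invmx M) p + 2^-1 * qform K q.

Definition normMinv (R : rcfType) (N : nat) (M : 'M[R]_N) (f : 'cV[R]_N) : R :=
  Num.sqrt (qform (invmx M) f).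

(* Main.v *)
Require Import Defs.
From mathcomp Require Import all_boot all_order all_algebra.
From mathcomp Require Import ring lra.
Import Order.TTheory GRing.Theory Num.Theory.
Local Open Scope ring_scope.
Set Implicit Arguments. Unset Strict Implicit.

Section Bil.
Variable (R : rcfType) (N : nat).
Implicit Types (A : 'M[R]_N) (x y z : 'cV[R]_N).

Definition bil A x y : R := (x^T *m A *m y) 0 0.

Lemma bilDl A x y z : bil A (x + y) z = bil A x z + bil A y z.
Proof. by rewrite /bil linearD /= !mulmxDl mxE. Qed.
Lemma bilDr A x y z : bil A z (x + y) = bil A z x + bil A z y.
Proof. by rewrite /bil !mulmxDr mxE. Qed.
Lemma bilZl A a x y : bil A (a *: x) y = a * bil A x y.
Proof. by rewrite /bil linearZ /= -!scalemxAl mxE. Qed.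
Lemma bilZr A a x y : bil A x (a *: y) = a * bil A x y.
Proof. by rewrite /bil -!scalemxAr mxE. Qed.
Lemma bilNl A x y : bil A (- x) y = - bil A x y.
Proof. by rewrite -scaleN1r bilZl mulN1r. Qed.
Lemma bilNr A x y : bil A x (- y) = - bil A x y.
Proof. by rewrite -scaleN1r bilZr mulN1r. Qed.
Lemma bilBl A x y z : bil A (x - y) z = bil A x z - bil A y z.
Proof. by rewrite bilDl bilNl. Qed.
Lemma bilBr A x y z : bil A z (x - y) = bil A z x - bil A z y.
Proof. by rewrite bilDr bilNr. Qed.
Lemma bilT A x y : bil A x y = bil A^T y x.
Proof.
rewrite /bil; transitivity ((x^T *m A *m y)^T 0 0); first by rewrite [RHS]mxE.
by rewrite !trmx_mul trmxK mulmxA.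
Qed.
Lemma bilS A x y : A^T = A -> bil A x y = bil A y x.
Proof. by move=> hA; rewrite bilT hA. Qed.

Lemma bil_cross A K x y : bil A (K *m x) y = bil K (A *m y) x.
Proof. by rewrite bilT /bil !trmx_mul !mulmxA. Qed.

Lemma bil0r A x : bil A x 0 = 0.
Proof. by rewrite /bil mulmx0 mxE. Qed.

Definition psd A := forall x, 0 <= bil A x x.

Lemma CS2 A x y : psd A -> A^T = A -> bil A x y ^+ 2 <= bil A x x * bil A y y.
Proof.
move=> hp hs.
set a := bil A y y; set b := bil A x y; set c := bil A x x.
have Q : forall s t, 0 <= s^+2 * c + 2 * s * t * b + t^+2 * a.
  move=> s t; have := hp (s *: x + t *: y).
  rewrite !bilDl !bilDr !bilZl !bilZr (bilS y x hs) -/a -/b -/c.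
  by move=> h; nra.
have a0 : 0 <= a by apply: hp.
have c0 : 0 <= c by apply: hp.
have h1 := Q a (- b).
have h2 := Q b (- c).
have h3 := Q 1 1.
have h4 := Q 1 (-1).
have := a0; rewrite le_eqVlt => /orP [/eqP az | ap]; last by nra.
have := c0; rewrite le_eqVlt => /orP [/eqP cz | cp]; last by nra.
rewrite -az -cz in h3 h4 *; nra.
Qed.

Lemma CS A x y : psd A -> A^T = A ->
  `|bil A x y| <= Num.sqrt (bil A x x) * Num.sqrt (bil A y y).
Proof.
move=> hp hs; rewrite -sqrtrM ?hp // -sqrtr_sqr ler_sqrt; last first.
  by apply: mulr_ge0; apply: hp.
exact: CS2.
Qed.

Lemma sqrt_le (a b : R) : 0 <= b -> a <= b ^+ 2 -> Num.sqrt a <= b.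
Proof. by move=> hb h; rewrite -(ger0_norm hb) -sqrtr_sqr ler_sqrt // sqr_ge0. Qed.

Lemma tri A x y : psd A -> A^T = A ->
  Num.sqrt (bil A (x + y) (x + y)) <= Num.sqrt (bil A x x) + Num.sqrt (bil A y y).
Proof.
move=> hp hs; apply: sqrt_le; first by rewrite addr_ge0 ?sqrtr_ge0.
have := CS x y hp hs.
rewrite !bilDl !bilDr (bilS y x hs).
have := sqr_sqrtr (hp x); have := sqr_sqrtr (hp y).
have := sqrtr_ge0 (bil A x x); have := sqrtr_ge0 (bil A y y).
have := ler_norm (bil A x y).
move: (Num.sqrt _) (Num.sqrt _) => s1 s2. nra.
Qed.

End Bil.

Lemma psd_inv (R : rcfType) N (M : 'M[R]_N) : sym_posdef M -> psd (invmx M).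
Proof.
move=> [hs hp].
have pM : psd M.
  move=> y; case: (eqVneq y 0) => [->|hy]; first by rewrite bil0r.
  exact/ltW/hp.
case: (boolP (M \in unitmx)) => hu; last by rewrite invmx_out.
move=> x; have := pM (invmx M *m x).
by rewrite /bil trmx_mul trmx_inv hs -!mulmxA (mulmxA M) mulmxV // mul1mx.
Qed.

Lemma qformE (R : rcfType) N (A : 'M[R]_N) x : qform A x = bil A x x.
Proof. by []. Qed.

Lemma psd_of (R : rcfType) N (M : 'M[R]_N) : sym_posdef M -> psd M.
Proof.
move=> [hs hp] y; case: (eqVneq y 0) => [->|hy]; first by rewrite bil0r.
exact/ltW/hp.
Qed.

Lemma step_id (R : rcfType) N (M K : 'M[R]_N) (dt : R) (f q0 q1 p0 p1 : 'cV[R]_N) :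
  sym_posdef M -> sym_posdef K ->
  q1 = q0 + dt *: (invmx M *m (2^-1 *: (p0 + p1))) ->
  p1 = p0 - dt *: (K *m (2^-1 *: (q0 + q1))) + dt *: f ->
  energy M K q1 p1 - energy M K q0 p0 = dt * 2^-1 * bil (invmx M) f (p0 + p1).
Proof.
move=> [hMs _] [hKs _] hq hp.
set A := invmx M.
have hA : A^T = A by rewrite /A trmx_inv hMs.
set P := 2^-1 *: (p0 + p1). set Q := 2^-1 *: (q0 + q1).
have hu : p1 - p0 = dt *: f - dt *: (K *m Q).
  by rewrite {1}hp addrAC (addrC p0) addrK addrC.
have hv : q1 - q0 = dt *: (A *m P) by rewrite {1}hq addrC addKr.
have two : (2 : R) != 0 by rewrite pnatr_eq0.
have hP : p1 + p0 = 2 *: P by rewrite /P scalerA mulfV // scale1r addrC.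
have hQ : q1 + q0 = 2 *: Q by rewrite /Q scalerA mulfV // scale1r addrC.
have e1 : bil A p1 p1 - bil A p0 p0 = 2 * (dt * bil A f P - dt * bil A (K *m Q) P).
  have -> : bil A p1 p1 - bil A p0 p0 = bil A (p1 - p0) (p1 + p0).
    by rewrite bilBl !bilDr (bilS p0 p1 hA); ring.
  by rewrite hu hP bilBl !bilZl !bilZr; ring.
have e2 : bil K q1 q1 - bil K q0 q0 = 2 * (dt * bil K (A *m P) Q).
  have -> : bil K q1 q1 - bil K q0 q0 = bil K (q1 - q0) (q1 + q0).
    by rewrite bilBl !bilDr (bilS q0 q1 hKs); ring.
  by rewrite hv hQ !bilZl !bilZr; ring.
have e3 := bil_cross A K Q P.
have e4 : bil A f P = 2^-1 * bil A f (p0 + p1) by rewrite /P bilZr.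
rewrite /energy !qformE -/A.
rewrite -mulrA -e4; rewrite -e3 in e2.
have h2 : (2 : R) * 2^-1 = 1 by rewrite mulfV.
lra.
Qed.

Lemma energy_ge0 (R : rcfType) N (M K : 'M[R]_N) q p :
  sym_posdef M -> sym_posdef K -> 0 <= energy M K q p.
Proof.
move=> hM hK; rewrite /energy !qformE.
have := psd_inv hM p; have := psd_of hK q.
have : (0:R) <= 2^-1 by rewrite invr_ge0 ler0n.
nra.
Qed.

Lemma nA_le (R : rcfType) N (M K : 'M[R]_N) q p :
  sym_posdef M -> sym_posdef K ->
  Num.sqrt (bil (invmx M) p p) <= Num.sqrt 2 * Num.sqrt (energy M K q p).
Proof.
move=> hM hK; rewrite -sqrtrM ?ler0n // ler_sqrt; last first.
  by apply: mulr_ge0; [rewrite ler0n | exact: energy_ge0].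
rewrite /energy !qformE.
have := psd_of hK q.
have h2 : (2 : R) * 2^-1 = 1 by rewrite mulfV // pnatr_eq0.
nra.
Qed.

Lemma step_bound (R : rcfType) N (M K : 'M[R]_N) (dt : R) (f q0 q1 p0 p1 : 'cV[R]_N) :
  sym_posdef M -> sym_posdef K -> 0 < dt ->
  q1 = q0 + dt *: (invmx M *m (2^-1 *: (p0 + p1))) ->
  p1 = p0 - dt *: (K *m (2^-1 *: (q0 + q1))) + dt *: f ->
  `|Num.sqrt (energy M K q1 p1) - Num.sqrt (energy M K q0 p0)|
     <= dt * (Num.sqrt 2)^-1 * normMinv M f.
Proof.
move=> hM hK hdt hq hp.
have hid := step_id hM hK hq hp.
have hMs : (invmx M)^T = invmx M by rewrite trmx_inv hM.1.
have cs := CS f (p0 + p1) (psd_inv hM) hMs.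
have tr := tri p0 p1 (psd_inv hM) hMs.
have b0 := nA_le q0 p0 hM hK.
have b1 := nA_le q1 p1 hM hK.
set s0 := Num.sqrt (energy M K q0 p0) in b0 *.
set s1 := Num.sqrt (energy M K q1 p1) in b1 *.
have E0 : energy M K q0 p0 = s0 ^+ 2 by rewrite sqr_sqrtr // energy_ge0.
have E1 : energy M K q1 p1 = s1 ^+ 2 by rewrite sqr_sqrtr // energy_ge0.
rewrite E0 E1 in hid.
rewrite /normMinv qformE.
set nf := Num.sqrt (bil (invmx M) f f) in cs *.
set nP := Num.sqrt (bil (invmx M) (p0 + p1) (p0 + p1)) in cs tr.
set n0 := Num.sqrt (bil (invmx M) p0 p0) in tr b0.
set n1 := Num.sqrt (bil (invmx M) p1 p1) in tr b1.
set r := Num.sqrt 2 in b0 b1 *.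
have r0 : 0 < r by rewrite sqrtr_gt0 ltr0n.
have rr : r ^+ 2 = 2 by rewrite sqr_sqrtr // ler0n.
have rinv : 2^-1 * r = r^-1.
  by rewrite -{1}rr expr2 invfM -mulrA mulVf ?mulr1 // gt_eqF.
have s00 : 0 <= s0 by apply: sqrtr_ge0.
have s10 : 0 <= s1 by apply: sqrtr_ge0.
have nf0 : 0 <= nf by apply: sqrtr_ge0.
have nP0 : 0 <= nP by apply: sqrtr_ge0.
set X := `|s1 - s0|.
have X0 : 0 <= X by apply: normr_ge0.
have XS : X <= s0 + s1.
  rewrite /X ler_norml; apply/andP; split; lra.
have XE : X * (s0 + s1) = `|s1 ^+ 2 - s0 ^+ 2|.
  by rewrite subr_sqr normrM (ger0_norm (x := s1 + s0)) ?addr_ge0 // addrC.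
rewrite hid normrM (ger0_norm (x := dt * _)) in XE; last first.
  by apply: mulr_ge0; [apply: ltW | rewrite invr_ge0 ler0n].
set C := dt * r^-1 * nf.
have C0 : 0 <= C by rewrite /C !mulr_ge0 ?invr_ge0 ?(ltW r0) ?(ltW hdt).
have key : X * (s0 + s1) <= C * (s0 + s1).
  rewrite XE /C -rinv.
  have hb : `|bil (invmx M) f (p0 + p1)| <= nf * (r * (s0 + s1)).
    apply: (le_trans cs); apply: ler_wpM2l => //; lra.
  have hdt2 : 0 <= dt * 2^-1 by rewrite mulr_ge0 ?invr_ge0 ?ler0n ?(ltW hdt).
  apply: le_trans (ler_wpM2l hdt2 hb) _.
  rewrite le_eqVlt; apply/orP; left; apply/eqP; ring.
nra.
Qed.

Theorem mainTheorem2 (R : rcfType) (N : nat) (M K : 'M[R]_N) (dt : R)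
  (f : nat -> 'cV[R]_N) (q p : nat -> 'cV[R]_N) :
  sym_posdef M -> sym_posdef K -> 0 < dt ->
  (forall n : nat,
     q n.+1 = q n + dt *: (invmx M *m (2^-1 *: (p n + p n.+1)))) ->
  (forall n : nat,
     p n.+1 = p n - dt *: (K *m (2^-1 *: (q n + q n.+1))) + dt *: f n) ->
  forall n : nat,
    `|Num.sqrt (energy M K (q n) (p n)) - Num.sqrt (energy M K (q 0) (p 0))|
      <= dt * (Num.sqrt 2)^-1 * \sum_(k < n) normMinv M (f k).
Proof.
move=> hM hK hdt hq hp; elim=> [|n IH].
  by rewrite big_ord0 subrr normr0 mulr0.
rewrite big_ord_recr /= mulrDr.
apply: le_trans (ler_distD _ _ _) _.
rewrite [X in _ <= X]addrC; apply: lerD => //.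
exact: step_bound.
exact: IH.
Qed.
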